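(* Let $I=(v,R,D)$ be an instance of the truck-drone problem, let $\mathcal{S}_g$ be the schedule produced by the greedy algorithm described in the context (for any tie-breaking), and let $\mathcal{S}_{OPT}$ be an optimal (maximum-length feasible) schedule for $I$. Then $\mathcal{S}_g$ is feasible and $|\mathcal{S}_{OPT}|\le 2|\mathcal{S}_g|$.
   Context: Truck-drone problem: a truck starts at $[0,0]$ at time $0$ and moves along the $x$-axis in the positive direction at speed $1$, so that at time $t$ it is at $[t,0]$. A drone with speed $v>1$ and flying range $R>0$ rides on it. An instance is $I=(v,R,D)$, with $D$ a finite multiset of points not on the positive $x$-axis. A delivery to $d$ starting at $[s,0]$ works as follows: the drone leaves at $[s,0]$, flies straight to $d$, then flies straight to meet the truck at $[r,0]$, where $r>s$ is the unique value with $|[s,0]d|+|d\,[r,0]|=v(r-s)$. The delivery is valid if $v(r-s)\le R$; we write $\mathrm{ret}(s,d)=r$. A schedule $((d_{i_1},s_1),\dots,(d_{i_m},s_m))$ (distinct indices, length $m$) is feasible if $s_1\ge0$, every delivery is valid, and the return point of delivery $j$ is $\le s_{j+1}$. Let $M=R/2$ and $m_0=\frac{R}{2v}\sqrt{v^2-1}$. For $d=[x,y]$ with $|y|\le m_0$, let $x'=M\sqrt{1-y^2/m_0^2}$, $es(d)=x-\frac{R}{2v}-x'$ and $ls(d)=x-\frac{R}{2v}+x'$; then $d$ is reachable by a valid delivery from $[s,0]$ exactly when $es(d)\le s\le ls(d)$. Greedy algorithm: set $s\gets0$ and let $U$ be the set of points of $D$ with $|y|\le m_0$. Repeat the following step.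 Let $F=\{d\in U: es(d)\le s\le ls(d)\}$. If $F\ne\emptyset$, choose $d\in F$ minimizing $\mathrm{ret}(s,d)$, append $(d,s)$ to the schedule, remove $d$ from $U$, and set $s\gets\mathrm{ret}(s,d)$. Otherwise, if some $d\in U$ has $es(d)>s$, set $s\gets\min\{es(d): d\in U, es(d)>s\}$. Otherwise stop. *)

(* Defs.v *)
From Stdlib Require Import Reals Lra List.
Import ListNotations.
Open Scope R_scope.

Definition point := (R * R)%type.

Definition dist (a b : point) : R :=
  sqrt ((fst a - fst b) ^ 2 + (snd a - snd b) ^ 2).

(* r is the return point ret(s,d): r > s and |[s,0]d| + |d[r,0]| = v(r-s).
   (Such r is unique; we use the defining relation.) *)
Definition is_ret (v s : R) (d : point) (r : R) : Prop :=
  s < r /\ dist (s, 0) d + dist d (r, 0) = v * (r - s).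

Definition valid_delivery (v Rg s : R) (d : point) (r : R) : Prop :=
  is_ret v s d r /\ v * (r - s) <= Rg.

Definition pt (D : list point) (i : nat) : point := nth i D (0, 0).

(* A schedule is a list of (index into D, start point s). *)
Fixpoint feasible_from (v Rg : R) (D : list point) (t : R)
    (S : list (nat * R)) : Prop :=
  match S with
  | [] => True
  | (i, s) :: S' =>
      t <= s /\
      exists r, valid_delivery v Rg s (pt D i) r /\ feasible_from v Rg D r S'
  end.

Definition feasible (v Rg : R) (D : list point) (S : list (nat * R)) : Prop :=
  NoDup (map fst S) /\
  (forall i, In i (map fst S) -> (i < length D)%nat) /\
  feasible_from v Rg D 0 S.

Definition Mg (Rg : R) : R := Rg / 2.
Definition m0 (v Rg : R) : R := Rg / (2 * v) * sqrt (v ^ 2 - 1).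
Definition xprime (v Rg : R) (d : point) : R :=
  Mg Rg * sqrt (1 - (snd d) ^ 2 / (m0 v Rg) ^ 2).
Definition es (v Rg : R) (d : point) : R :=
  fst d - Rg / (2 * v) - xprime v Rg d.
Definition ls (v Rg : R) (d : point) : R :=
  fst d - Rg / (2 * v) + xprime v Rg d.

Definition in_F (v Rg : R) (D : list point) (U : list nat) (s : R) (j : nat)
  : Prop := In j U /\ es v Rg (pt D j) <= s <= ls v Rg (pt D j).

Definition remove_idx (i : nat) (U : list nat) : list nat :=
  filter (fun j => negb (Nat.eqb j i)) U.

(* greedy_run v Rg D s U acc final : starting from current position s,
   remaining set U (indices) and schedule built so far acc, the greedy
   algorithm (with some tie-breaking) terminates with schedule final. *)
Inductive greedy_run (v Rg : R) (D : list point)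
  : R -> list nat -> list (nat * R) -> list (nat * R) -> Prop :=
| gr_pick : forall s U acc final i r,
    in_F v Rg D U s i ->
    is_ret v s (pt D i) r ->
    (forall j rj, in_F v Rg D U s j -> is_ret v s (pt D j) rj -> r <= rj) ->
    greedy_run v Rg D r (remove_idx i U) (acc ++ [(i, s)]) final ->
    greedy_run v Rg D s U acc final
| gr_jump : forall s U acc final j,
    (forall k, ~ in_F v Rg D U s k) ->
    In j U -> s < es v Rg (pt D j) ->
    (forall k, In k U -> s < es v Rg (pt D k) -> es v Rg (pt D j) <= es v Rg (pt D k)) ->
    greedy_run v Rg D (es v Rg (pt D j)) U acc final ->
    greedy_run v Rg D s U acc final
| gr_stop : forall s U acc,
    (forall k, ~ in_F v Rg D U s k) ->
    (forall k, In k U -> es v Rg (pt D k) <= s) ->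
    greedy_run v Rg D s U acc acc.

Definition U0 (v Rg : R) (D : list point) : list nat :=
  filter (fun i => if Rle_dec (Rabs (snd (pt D i))) (m0 v Rg) then true else false)
         (seq 0 (length D)).

Definition greedy_schedule (v Rg : R) (D : list point) (S : list (nat * R)) : Prop :=
  greedy_run v Rg D 0 (U0 v Rg D) [] S.

(* Main.v *)
Require Import Defs.
From Stdlib Require Import Reals Lra Lia Psatz List Setoid.
Import ListNotations.
Require Import Defs.
Open Scope R_scope.

Lemma sq_le (a b : R) : 0 <= b -> a*a <= b*b -> a <= b.
Proof. intros. nra. Qed.

Lemma sqrt_le_w z w : 0 <= w -> z <= w*w -> sqrt z <= w.
Proof. intros Hw Hz. destruct (Rle_dec 0 z).
  - apply sq_le; auto. rewrite sqrt_sqrt; auto.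
  - rewrite sqrt_neg_0; lra. Qed.

Lemma dist_sym a b : dist a b = dist b a.
Proof. unfold dist. f_equal. ring. Qed.

Lemma dist_ax a (d : point) : dist (a,0) d = sqrt ((fst d - a)^2 + (snd d)^2).
Proof. unfold dist. simpl. f_equal. ring. Qed.

Lemma sqrt_sq_facts z : 0 <= z -> 0 <= sqrt z /\ sqrt z * sqrt z = z.
Proof. intros. split. apply sqrt_pos. apply sqrt_sqrt; auto. Qed.

Lemma tri a b d : dist (a,0) d <= Rabs (a-b) + dist (b,0) d.
Proof.
  rewrite !dist_ax. destruct d as [x y]; cbn [fst snd].
  destruct (sqrt_sq_facts ((x-b)^2+y^2)) as [HQ HQ2]. pose proof (pow2_ge_0 (x-b)); pose proof (pow2_ge_0 y); lra.
  set (Q := sqrt ((x-b)^2+y^2)) in *. clearbody Q.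
  assert (HA: 0 <= Rabs (a-b)) by apply Rabs_pos.
  apply sqrt_le_w. lra.
  assert (Hxb : Rabs (x-b) <= Q).
  { apply sq_le; auto. rewrite HQ2. rewrite <- Rabs_mult.
    rewrite Rabs_right; [ | apply Rle_ge; pose proof (Rle_0_sqr (x-b)); unfold Rsqr in *; lra]. pose proof (pow2_ge_0 y). assert ((x-b)^2 = (x-b)*(x-b)) by ring. lra. }
  assert (H1: (x-b)*(b-a) <= Rabs (x-b) * Rabs (a-b)).
  { rewrite (Rabs_minus_sym a b), <- Rabs_mult. apply Rle_abs. }
  assert (Rabs (x-b) * Rabs (a-b) <= Q * Rabs (a-b)) by (apply Rmult_le_compat_r; auto).
  assert (Rabs (a-b) * Rabs (a-b) = (a-b)*(a-b)).
  { rewrite <- Rabs_mult. rewrite Rabs_right; [auto| apply Rle_ge; pose proof (Rle_0_sqr (a-b)); unfold Rsqr in *; lra]. }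
  nra.
Qed.

Lemma tri' a b d : dist d (a,0) <= Rabs (a-b) + dist d (b,0).
Proof. rewrite !(dist_sym d). apply tri. Qed.

Section G.
Variables (v Rg : R).
Hypothesis Hv : 1 < v.
Hypothesis HR : 0 < Rg.

Definition E s (d : point) := dist (s,0) d + dist d (s + Rg/v, 0) <= Rg.

Lemma valid_E s d r : valid_delivery v Rg s d r -> E s d.
Proof.
  intros [[Hsr Heq] Hle]. unfold E.
  pose proof (tri' (s+Rg/v) r d).
  assert (Rg/v * v = Rg) by (field; lra).
  assert (r - s <= Rg / v).
  { apply (Rmult_le_reg_l v). lra. nra. }
  rewrite Rabs_right in H by lra. nra.
Qed.

Lemma E_ret s d r : E s d -> is_ret v s d r -> v*(r-s) <= Rg.
Proof.
  intros HE [Hsr Heq]. unfold E in HE.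
  pose proof (tri' r (s+Rg/v) d).
  assert (Rg/v * v = Rg) by (field; lra).
  destruct (Rle_dec r (s + Rg/v)).
  - nra.
  - rewrite Rabs_right in H by lra. nra.
Qed.

Lemma E_shift s s' d r' : s <= s' -> is_ret v s' d r' -> r' - Rg/v <= s -> E (r' - Rg/v) d.
Proof.
  intros Hss [Hsr Heq] Hr. unfold E.
  pose proof (tri (r' - Rg/v) s' d).
  assert (Rg/v * v = Rg) by (field; lra).
  replace (r' - Rg/v + Rg/v) with r' by ring.
  rewrite Rabs_left1 in H by lra. nra.
Qed.

Lemma ret_mono s s' d rj r' : s <= s' -> is_ret v s d rj -> is_ret v s' d r' -> rj <= r'.
Proof.
  intros Hss [H1 E1] [H2 E2].
  destruct (Rle_dec rj r'); auto. exfalso.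
  pose proof (tri s s' d). pose proof (tri' rj r' d).
  rewrite Rabs_left1 in H by lra. rewrite Rabs_right in H0 by lra.
  nra.
Qed.

End G.

Lemma core_fw c M m X y P Q : 0 < c < M -> m*m = M*M - c*c -> 0 <= P -> 0 <= Q ->
  P*P = (X+c)^2 + y^2 -> Q*Q = (X-c)^2 + y^2 -> P + Q <= 2*M ->
  X^2*m^2 + M^2*y^2 <= M^2*m^2.
Proof.
  intros Hc Hm HP HQ HP2 HQ2 H.
  assert (H1: P*P <= (2*M-Q)*(2*M-Q)) by nra.
  assert (H2: M*Q <= M*M - c*X) by nra.
  assert (H3: (M*Q)*(M*Q) <= (M*M-c*X)*(M*M-c*X)).
  { assert (0 <= M*Q) by nra. nra. }
  nra.
Qed.

Lemma core_bw c M m X y P Q : 0 < c < M -> 0 < m -> m*m = M*M - c*c -> 0 <= P -> 0 <= Q ->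
  P*P = (X+c)^2 + y^2 -> Q*Q = (X-c)^2 + y^2 -> 
  X^2*m^2 + M^2*y^2 <= M^2*m^2 -> P + Q <= 2*M.
Proof.
  intros Hc Hm0 Hm HP HQ HP2 HQ2 H.
  assert (HX: X*X <= M*M).
  { assert (0 <= M^2*y^2) by (pose proof (pow2_ge_0 y); pose proof (pow2_ge_0 M); nra).
    assert (X^2*m^2 <= M^2*m^2) by lra.
    assert (X^2 <= M^2) by (apply (Rmult_le_reg_r (m^2)); [apply pow_lt; lra | lra]). simpl in *. nra. }
  assert (HX2: c*X <= c*M) by (apply Rmult_le_compat_l; nra).
  assert (HW: 0 <= M*M - c*X) by nra.
  assert (E: (M*M-c*X)*(M*M-c*X) - (M*Q)*(M*Q) = M^2*m^2 - X^2*m^2 - M^2*y^2).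
  { replace ((M*Q)*(M*Q)) with (M*M*(Q*Q)) by ring. rewrite HQ2.
    replace (m^2) with (m*m) by ring. rewrite Hm. ring. }
  assert (H3: (M*Q)*(M*Q) <= (M*M-c*X)*(M*M-c*X)) by lra.
  assert (H4: M*Q <= M*M - c*X) by nra.
  assert (HXb: -M <= X) by nra.
  assert (H5': M*Q <= M*(2*M)) by nra.
  assert (H5: Q <= 2*M) by (apply (Rmult_le_reg_l M); lra).
  assert (H6: P*P <= (2*M-Q)*(2*M-Q)) by nra.
  nra.
Qed.

Section P.
Variables (v Rg : R).
Hypothesis Hv : 1 < v.
Hypothesis HR : 0 < Rg.

Definition cc := Rg/(2*v).
Definition Kp s (d : point) :=
  (fst d - s - cc)^2 * (m0 v Rg)^2 + (Mg Rg)^2 * (snd d)^2 <= (Mg Rg)^2 * (m0 v Rg)^2.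

Lemma params : 0 < cc < Mg Rg /\ 0 < m0 v Rg /\
  m0 v Rg * m0 v Rg = Mg Rg * Mg Rg - cc * cc.
Proof.
  unfold cc, Mg, m0.
  assert (Hs: 0 < sqrt (v^2-1)) by (apply sqrt_lt_R0; nra).
  assert (Hs2: sqrt (v^2-1) * sqrt (v^2-1) = v^2-1) by (apply sqrt_sqrt; nra).
  assert (0 < Rg/(2*v)) by (apply Rdiv_lt_0_compat; lra).
  split; [split|split].
  - auto.
  - apply (Rmult_lt_reg_r (2*v)). lra. field_simplify; nra.
  - apply Rmult_lt_0_compat; auto.
  - replace (Rg / (2 * v) * sqrt (v ^ 2 - 1) * (Rg / (2 * v) * sqrt (v ^ 2 - 1)))
      with (Rg / (2 * v) * (Rg / (2 * v)) * (sqrt (v ^ 2 - 1) * sqrt (v ^ 2 - 1))) by ring.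
    rewrite Hs2. field. lra.
Qed.

Lemma E_iff_K s d : E v Rg s d <-> Kp s d.
Proof.
  destruct params as [Hc [Hm Hmm]].
  unfold E, Kp. rewrite (dist_sym d), !dist_ax. destruct d as [x y]. cbn [fst snd].
  set (X := x - s - cc).
  assert (HP := sqrt_sq_facts ((x - s) ^ 2 + y ^ 2)).
  assert (HQ := sqrt_sq_facts ((x - (s + Rg / v)) ^ 2 + y ^ 2)).
  destruct HP as [HP HP2]. { pose proof (pow2_ge_0 (x-s)); pose proof (pow2_ge_0 y); lra. }
  destruct HQ as [HQ HQ2]. { pose proof (pow2_ge_0 (x-(s+Rg/v))); pose proof (pow2_ge_0 y); lra. }
  assert (E1: x - s = X + cc) by (unfold X; ring).
  assert (E2: x - (s + Rg/v) = X - cc) by (unfold X, cc; field; lra).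
  rewrite E1 in HP2, HP |- *. rewrite E2 in HQ2, HQ |- *.
  assert (ERg: Rg = 2 * Mg Rg) by (unfold Mg; field).
  split; intro H.
  - apply (core_fw cc (Mg Rg) (m0 v Rg) X y _ _ Hc Hmm HP HQ HP2 HQ2). lra.
  - rewrite ERg at 1. apply (core_bw cc (Mg Rg) (m0 v Rg) X y _ _ Hc Hm Hmm HP HQ HP2 HQ2 H).
Qed.

Lemma K_y s d : Kp s d -> (snd d)^2 <= (m0 v Rg)^2.
Proof.
  destruct params as [Hc [Hm Hmm]]. unfold Kp. intro H.
  pose proof (pow2_ge_0 (fst d - s - cc)). pose proof (pow2_ge_0 (m0 v Rg)).
  assert (0 < Mg Rg ^2) by (apply pow_lt; lra).
  assert (Mg Rg ^ 2 * snd d ^ 2 <= Mg Rg ^ 2 * m0 v Rg ^ 2) by nra.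
  apply (Rmult_le_reg_l (Mg Rg ^2)); auto.
Qed.

Lemma K_inF s d : (snd d)^2 <= (m0 v Rg)^2 ->
  (Kp s d <-> es v Rg d <= s <= ls v Rg d).
Proof.
  destruct params as [Hc [Hm Hmm]]. intro Hy.
  unfold Kp, es, ls, xprime. fold cc.
  set (X := fst d - s - cc).
  set (z := 1 - snd d ^ 2 / m0 v Rg ^ 2).
  assert (Hm2: 0 < m0 v Rg ^2) by (apply pow_lt; lra).
  assert (Hz: 0 <= z).
  { unfold z. assert (snd d ^ 2 / m0 v Rg ^ 2 <= 1).
    { apply (Rmult_le_reg_r (m0 v Rg ^2)); auto. field_simplify; lra. } lra. }
  assert (Hzm: z * m0 v Rg ^2 = m0 v Rg ^2 - snd d ^2) by (unfold z; field; lra).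
  destruct (sqrt_sq_facts z Hz) as [Hs Hs2].
  set (W := Mg Rg * sqrt z).
  assert (HW: 0 <= W) by (unfold W; apply Rmult_le_pos; lra).
  assert (HW2: W * W * m0 v Rg ^2 = Mg Rg ^2 * m0 v Rg ^2 - Mg Rg^2 * snd d ^2).
  { unfold W. replace (Mg Rg * sqrt z * (Mg Rg * sqrt z) * m0 v Rg ^ 2) with
      (Mg Rg ^2 * (sqrt z * sqrt z) * m0 v Rg ^ 2) by ring. rewrite Hs2.
    rewrite Rmult_assoc, Hzm. ring. }
  assert (Hiff: (fst d - cc - W <= s <= fst d - cc + W) <-> (-W <= X <= W))
    by (unfold X; split; intros; lra).
  rewrite Hiff.
  split; intro H.
  - assert (X*X <= W*W).
    { apply (Rmult_le_reg_r (m0 v Rg ^2)); auto. simpl in H |- *. nra. }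
    split; nra.
  - assert (X*X <= W*W) by nra. simpl in *. nra.
Qed.
End P.

Lemma ret_exists v s (d : point) : 1 < v -> (snd d <> 0 \/ fst d <> s) -> exists r, is_ret v s d r.
Proof.
  intros Hv Hd. destruct d as [x y]; cbn [fst snd] in Hd.
  set (X := x - s).
  assert (HA := sqrt_sq_facts (X^2 + y^2)).
  destruct HA as [HA HA2]. { pose proof (pow2_ge_0 X); pose proof (pow2_ge_0 y); lra. }
  remember (sqrt (X^2+y^2)) as A eqn:HAe.
  assert (HApos: 0 < A).
  { destruct (Rle_lt_or_eq_dec 0 A HA) as [h|h]; auto. exfalso. rewrite <- h in HA2.
    rewrite Rmult_0_l in HA2.
    assert (X*X + y*y = 0) by (replace (X*X) with (X^2) by ring; replace (y*y) with (y^2) by ring; lra).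
    assert (X = 0 /\ y = 0) by (split; nra).
    destruct H0 as [H0 H1]. unfold X in H0. destruct Hd; lra. }
  assert (HA2' : A*A = X*X + y*y) by (rewrite HA2; ring).
  assert (HXA: X <= A) by nra.
  set (u := 2*(v*A - X)/(v^2-1)).
  assert (Hv2: 0 < v^2 - 1) by nra.
  assert (Hu: 0 < u) by (unfold u; apply Rdiv_lt_0_compat; nra).
  assert (Huv: u*(v^2-1) = 2*(v*A-X)) by (unfold u; field; lra).
  assert (Hvu: 0 <= v*u - A).
  { assert ((v*u - A)*(v^2-1) = v^2*A + A - 2*v*X) by nra.
    assert (0 <= A*((v-1)*(v-1))) by (apply Rmult_le_pos; nra). assert (0 <= v*(A-X)) by (apply Rmult_le_pos; lra).
    assert (0 <= v^2*A + A - 2*v*X) by nra.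
    destruct (Rle_dec 0 (v*u - A)); auto. nra. }
  exists (s + u). split. lra.
  rewrite dist_ax, dist_sym, dist_ax. cbn [fst snd]. fold X.
  replace (x - (s+u)) with (X - u) by (unfold X; ring).
  rewrite <- HAe.
  rewrite (sqrt_lem_1 _ (v*u - A)); auto.
  - ring.
  - pose proof (pow2_ge_0 (X-u)); pose proof (pow2_ge_0 y); lra.
  - nra.
Qed.

Lemma sq_abs_le y m : 0 < m -> Rabs y <= m -> y^2 <= m^2.
Proof. intros Hm H. replace (y^2) with (Rabs y * Rabs y).
  - pose proof (Rabs_pos y). simpl. nra.
  - rewrite <- Rabs_mult. rewrite Rabs_right; [ring|]. apply Rle_ge.
    pose proof (Rle_0_sqr y). unfold Rsqr in *. lra. Qed.

Lemma sq_le_abs y m : 0 < m -> y^2 <= m^2 -> Rabs y <= m.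
Proof. intros Hm H. apply sq_le; [lra|].
  rewrite <- Rabs_mult. rewrite Rabs_right. simpl in H. nra. apply Rle_ge.
  pose proof (Rle_0_sqr y). unfold Rsqr in *. lra. Qed.

Section Main.
Variables (v Rg : R) (D : list point).
Hypothesis Hv : 1 < v.
Hypothesis HR : 0 < Rg.
Hypothesis HD : forall d, In d D -> ~ (snd d = 0 /\ 0 <= fst d).

Lemma valid_avail s d r : valid_delivery v Rg s d r ->
  es v Rg d <= s <= ls v Rg d /\ Rabs (snd d) <= m0 v Rg.
Proof.
  intro H. destruct (params v Rg Hv HR) as [_ [Hm _]].
  apply valid_E in H; auto. apply E_iff_K in H; auto.
  pose proof (K_y v Rg Hv HR _ _ H) as Hy. split.
  - apply (K_inF v Rg Hv HR s d Hy); auto.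
  - apply sq_le_abs; auto.
Qed.

Lemma avail_valid s d r : Rabs (snd d) <= m0 v Rg -> es v Rg d <= s <= ls v Rg d ->
  is_ret v s d r -> v * (r - s) <= Rg.
Proof.
  intros Hy Hin Hr. destruct (params v Rg Hv HR) as [_ [Hm _]].
  apply sq_abs_le in Hy; auto.
  apply (E_ret v Rg Hv s d r); auto.
  apply E_iff_K; auto. apply (K_inF v Rg Hv HR s d Hy); auto.
Qed.

Lemma notaxis i s : (i < length D)%nat -> 0 <= s -> snd (pt D i) <> 0 \/ fst (pt D i) <> s.
Proof.
  intros Hi Hs. assert (In (pt D i) D) by (apply nth_In; auto).
  apply HD in H. destruct (Req_dec (snd (pt D i)) 0); [right|left]; auto.
  intro. apply H. split; auto. lra.
Qed.

Definition inb (i : nat) (l : list nat) : bool := if in_dec Nat.eq_dec i l then true else false.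
Definition undb (U G : list nat) (i : nat) : bool := inb i U && negb (inb i G).
Definition cnt (f : nat -> bool) (S : list (nat * R)) : nat := length (filter (fun p => f (fst p)) S).

Lemma feas_head t i s S : feasible_from v Rg D t ((i,s)::S) ->
  t <= s /\ exists r, valid_delivery v Rg s (pt D i) r /\ feasible_from v Rg D r S.
Proof. simpl. auto. Qed.

Lemma feas_mono t t' S : t' <= t -> feasible_from v Rg D t S -> feasible_from v Rg D t' S.
Proof. destruct S as [|[i s] S]; simpl; auto. intros H [H1 H2]. split; auto. lra. Qed.

Lemma run_prefix s U acc final : greedy_run v Rg D s U acc final -> exists rest, final = acc ++ rest.
Proof.
  induction 1.
  - destruct IHgreedy_run as [rest Hr]. exists ((i,s)::rest). rewrite Hr, <- app_assoc. auto.
  - auto.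
  - exists []. rewrite app_nil_r. auto.
Qed.

Lemma cnt_ext f g S : (forall i, f i = g i) -> cnt f S = cnt g S.
Proof. intro H. unfold cnt. f_equal. apply filter_ext. intros. apply H. Qed.

Lemma cnt_cons_f f i s S : f i = false -> cnt f ((i,s)::S) = cnt f S.
Proof. intro H. unfold cnt. simpl. rewrite H. auto. Qed.

Lemma cnt_cons_t f i s L : f i = true -> cnt f ((i,s)::L) = (1 + cnt f L)%nat.
Proof. intro H. unfold cnt. simpl. rewrite H. auto. Qed.

Definition HUp (U : list nat) := forall i, In i U -> (i < length D)%nat /\ Rabs (snd (pt D i)) <= m0 v Rg.

Lemma undb_true U G i : undb U G i = true -> In i U /\ ~ In i G.
Proof. unfold undb, inb. destruct (in_dec Nat.eq_dec i U); destruct (in_dec Nat.eq_dec i G); simpl; intuition congruence. Qed.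

Lemma count_inv s U acc final : greedy_run v Rg D s U acc final -> 0 <= s -> HUp U ->
  forall t L, s <= t -> feasible_from v Rg D t L ->
  (cnt (undb U (map fst final)) L + length acc <= length final)%nat.
Proof.
  induction 1 as [s U acc final i r HF Hr Hmin Hrun IH
                 | s U acc final j HnF Hj Hsj Hmin Hrun IH
                 | s U acc HnF Hall]; intros Hs0 HU.
  -
    assert (Hfin: In i (map fst final)).
    { destruct (run_prefix _ _ _ _ Hrun) as [rest ->]. rewrite map_app, in_app_iff. left.
      rewrite map_app, in_app_iff. right. simpl. auto. }
    assert (Hext: forall k, undb U (map fst final) k = undb (remove_idx i U) (map fst final) k).
    { intro k. unfold undb, inb, remove_idx.
      destruct (in_dec Nat.eq_dec k (map fst final)); simpl; [rewrite !Bool.andb_false_r; auto|].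
      rewrite !Bool.andb_true_r.
      destruct (in_dec Nat.eq_dec k U) as [h|h]; destruct (in_dec Nat.eq_dec k (filter (fun j => negb (j =? i)%nat) U)) as [h'|h']; auto.
      - exfalso. apply h'. apply filter_In. split; auto. apply Bool.negb_true_iff. apply Nat.eqb_neq. intro; subst; auto.
      - exfalso. apply filter_In in h'. tauto. }
    assert (Hrs: s < r) by (destruct Hr; auto).
    assert (HU': HUp (remove_idx i U)).
    { intros k Hk. apply HU. unfold remove_idx in Hk. apply filter_In in Hk. tauto. }
    assert (IH': forall t L, r <= t -> feasible_from v Rg D t L ->
       (cnt (undb U (map fst final)) L + (length acc + 1) <= length final)%nat).
    { intros t L Ht HS. rewrite (cnt_ext _ _ L Hext).
      assert (Hr0: 0 <= r) by lra. specialize (IH Hr0 HU' t L Ht HS). rewrite length_app in IH. cbn [length] in IH. lia. }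
    destruct HF as [HiU Hies].
    assert (Hpickv: v*(r-s) <= Rg) by (apply (avail_valid s (pt D i)); auto; apply HU; auto).
    intros t L. revert t. induction L as [|[k s'] L IHS]; intros t Hst HS.
    + specialize (IH' r [] ltac:(lra) I). simpl in IH' |- *. lia.
    + destruct (feas_head _ _ _ _ HS) as [Hts' [r' [Hval HS']]].
      assert (Hr'': s' < r') by (destruct Hval as [[? ?] ?]; auto).
      destruct (Rle_dec r s') as [Hle|Hlt].
      * assert (HSr: feasible_from v Rg D r ((k,s')::L)) by (simpl; split; auto; exists r'; auto).
        pose proof (IH' r _ (Rle_refl r) HSr). lia.
      * destruct (undb U (map fst final) k) eqn:Hk.
        -- rewrite cnt_cons_t; auto.
           apply undb_true in Hk. destruct Hk as [HkU _].
           destruct (valid_avail _ _ _ Hval) as [[Hes Hls] _].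
           assert (Hrr': r <= r').
           { destruct (Rle_dec (es v Rg (pt D k)) s) as [Hes'|Hes'].
             - destruct (HU k HkU) as [Hklen _].
               destruct (ret_exists v s (pt D k) Hv (notaxis k s Hklen Hs0)) as [rj Hrj].
               assert (r <= rj). { apply (Hmin k rj); auto. split; auto. split; lra. }
               assert (rj <= r') by (apply (ret_mono v Hv s s' (pt D k)); auto; try lra; destruct Hval; auto).
               lra.
             - destruct (Rle_dec (s + Rg/v) r') as [h|h].
               + assert (Rg/v * v = Rg) by (field; lra).
                 assert (r - s <= Rg/v).
                 { apply (Rmult_le_reg_l v). lra. nra. }
                 lra.
               + exfalso. destruct Hval as [Hret _].
                 assert (HE := E_shift v Rg Hv s s' (pt D k) r' ltac:(lra) Hret ltac:(lra)).
                 apply E_iff_K in HE; auto.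
                 pose proof (K_y v Rg Hv HR _ _ HE) as Hy.
                 apply (K_inF v Rg Hv HR _ _ Hy) in HE. lra. }
           specialize (IH' r' L Hrr' HS'). lia.
        -- rewrite cnt_cons_f; auto. apply (IHS r'). lra. auto.
  -
    assert (Hs0' : 0 <= es v Rg (pt D j)) by lra.
    specialize (IH Hs0' HU).
    intros t L. revert t. induction L as [|[k s'] L IHS]; intros t Hst HS.
    + apply (IH (es v Rg (pt D j)) []). lra. exact I.
    + destruct (feas_head _ _ _ _ HS) as [Hts' [r' [Hval HS']]].
      assert (Hr'': s' < r') by (destruct Hval as [[? ?] ?]; auto).
      destruct (Rle_dec (es v Rg (pt D j)) s') as [Hle|Hlt].
      * apply (IH (es v Rg (pt D j))). lra. simpl. split; auto. exists r'. auto.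
      * destruct (undb U (map fst final) k) eqn:Hk.
        -- exfalso. apply undb_true in Hk. destruct Hk as [HkU _].
           destruct (valid_avail _ _ _ Hval) as [[Hes Hls] _].
           destruct (Rle_dec (es v Rg (pt D k)) s) as [h|h].
           ++ apply (HnF k). split; auto. split; lra.
           ++ assert (es v Rg (pt D j) <= es v Rg (pt D k)) by (apply Hmin; auto; lra). lra.
        -- rewrite cnt_cons_f; auto. apply (IHS r'). lra. auto.
  -
    intros t L. revert t. induction L as [|[k s'] L IHS]; intros t Hst HS.
    + simpl. lia.
    + destruct (feas_head _ _ _ _ HS) as [Hts' [r' [Hval HS']]].
      assert (Hr'': s' < r') by (destruct Hval as [[? ?] ?]; auto).
      destruct (undb U (map fst acc) k) eqn:Hk.
      * exfalso. apply undb_true in Hk. destruct Hk as [HkU _].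
        destruct (valid_avail _ _ _ Hval) as [[Hes Hls] _].
        apply (HnF k). split; auto. split; [apply Hall; auto | lra].
      * rewrite cnt_cons_f; auto. apply (IHS r'). lra. auto.
Qed.

End Main.

Section Feas.
Variables (v Rg : R) (D : list point).
Hypothesis Hv : 1 < v.
Hypothesis HR : 0 < Rg.

Fixpoint fe (t : R) (L : list (nat*R)) (e : R) : Prop :=
  match L with
  | [] => t <= e
  | (i,s)::L' => t <= s /\ exists r, valid_delivery v Rg s (pt D i) r /\ fe r L' e
  end.

Lemma fe_feas t L e : fe t L e -> feasible_from v Rg D t L.
Proof. revert t. induction L as [|[i s] L IH]; simpl; auto.
  intros t [H1 [r [H2 H3]]]. split; auto. exists r. split; auto. Qed.

Lemma fe_mono t L e e' : fe t L e -> e <= e' -> fe t L e'.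
Proof. revert t. induction L as [|[i s] L IH]; simpl; intros t.
  - lra.
  - intros [H1 [r [H2 H3]]] He. split; auto. exists r. split; auto. Qed.

Lemma fe_snoc t L e i s r : fe t L e -> e <= s -> valid_delivery v Rg s (pt D i) r ->
  fe t (L ++ [(i,s)]) r.
Proof. revert t. induction L as [|[j s0] L IH]; simpl; intros t.
  - intros. cbn. split; [lra|]. exists r. split; auto. lra.
  - intros [H1 [r0 [H2 H3]]] He Hval. split; auto. exists r0. split; auto. Qed.

Lemma greedy_feas s U acc final : greedy_run v Rg D s U acc final -> 0 <= s -> HUp v Rg D U ->
  fe 0 acc s -> NoDup (map fst acc) -> (forall i, In i U -> ~ In i (map fst acc)) ->
  (forall i, In i (map fst acc) -> (i < length D)%nat) ->
  feasible v Rg D final.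
Proof.
  induction 1 as [s U acc final i r HF Hr Hmin Hrun IH
                 | s U acc final j HnF Hj Hsj Hmin Hrun IH
                 | s U acc HnF Hall]; intros Hs0 HU Hfe Hnd Hdis Hlen.
  - destruct HF as [HiU Hies]. destruct (HU i HiU) as [Hil Hiy].
    assert (Hrs: s < r) by (destruct Hr; auto).
    assert (Hval: valid_delivery v Rg s (pt D i) r).
    { split; auto. apply (avail_valid v Rg Hv HR s (pt D i)); auto. }
    apply IH.
    + lra.
    + intros k Hk. apply HU. unfold remove_idx in Hk. apply filter_In in Hk. tauto.
    + apply (fe_snoc _ _ s); auto. lra.
    + rewrite map_app. simpl. apply NoDup_app; auto.
      * constructor; auto. constructor.
      * intros x Hx Hx2. simpl in Hx2. destruct Hx2 as [Heq|[]]. subst x. exact (Hdis i HiU Hx).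
    + intros k Hk. unfold remove_idx in Hk. apply filter_In in Hk. destruct Hk as [Hk1 Hk2].
      rewrite map_app, in_app_iff. simpl. intros [Hk3|[Hk3|[]]].
      * apply (Hdis k); auto.
      * subst. rewrite Nat.eqb_refl in Hk2. discriminate.
    + intros k. rewrite map_app, in_app_iff. simpl. intros [Hk|[<-|[]]]; auto.
  - apply IH; auto. lra. eapply fe_mono; eauto. lra.
  - split; auto. split; auto. eapply fe_feas; eauto.
Qed.

Lemma feas_in t L i s : feasible_from v Rg D t L -> In (i,s) L ->
  exists r, valid_delivery v Rg s (pt D i) r.
Proof. revert t. induction L as [|[j s0] L IH]; simpl; intros t.
  - intros _ [].
  - intros [H1 [r [H2 H3]]] [Heq|Hin].
    + inversion Heq; subst. eauto.
    + eapply IH; eauto. Qed.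

Lemma len_split (f g : nat -> bool) (L : list (nat*R)) :
  (forall p, In p L -> f (fst p) = true \/ g (fst p) = true) ->
  (length L <= cnt f L + cnt g L)%nat.
Proof. induction L as [|[i s] L IH]; simpl; intros H. lia.
  unfold cnt in *. simpl.
  assert (IH' := IH (fun p Hp => H p (or_intror Hp))).
  destruct (H (i,s) (or_introl eq_refl)) as [Hf|Hg]; simpl in *;
  destruct (f i); destruct (g i); simpl; try discriminate; lia. Qed.

Lemma nodup_filter_map (P : nat -> bool) (L : list (nat*R)) :
  NoDup (map fst L) -> NoDup (map fst (filter (fun p => P (fst p)) L)).
Proof. induction L as [|[i s] L IH]; simpl; intros H. constructor.
  inversion H; subst. destruct (P i); simpl; auto. constructor; auto.
  intro Hc. apply H2. apply in_map_iff in Hc. destruct Hc as [[j s0] [Hj Hin]].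
  apply filter_In in Hin. apply in_map_iff. exists (j,s0). simpl in *. tauto. Qed.

End Feas.

Theorem theorem4p1 (v Rg : R) (D : list point)
  (Hv : 1 < v) (HR : 0 < Rg)
  (HD : forall d, In d D -> ~ (snd d = 0 /\ 0 <= fst d))
  (Sg : list (nat * R)) (Hg : greedy_schedule v Rg D Sg) :
  feasible v Rg D Sg /\
  (forall Sopt, feasible v Rg D Sopt -> (length Sopt <= 2 * length Sg)%nat).
Proof.
  assert (HU0: HUp v Rg D (U0 v Rg D)).
  { intros i Hi. unfold U0 in Hi. apply filter_In in Hi. destruct Hi as [Hi1 Hi2].
    apply in_seq in Hi1. split. lia.
    destruct (Rle_dec (Rabs (snd (pt D i))) (m0 v Rg)); auto. discriminate. }
  split.
  - eapply greedy_feas; eauto. lra. simpl. lra. constructor. simpl; auto. simpl; tauto.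
  - intros Sopt [Hnd [Hlen Hf]].
    set (G := map fst Sg).
    assert (H1 := count_inv v Rg D Hv HR HD _ _ _ _ Hg (Rle_refl 0) HU0 0 Sopt (Rle_refl 0) Hf).
    simpl in H1. rewrite Nat.add_0_r in H1.
    assert (H2 : (length Sopt <= cnt (fun i => inb i G) Sopt + cnt (undb (U0 v Rg D) G) Sopt)%nat).
    { apply len_split. intros [i s] Hin. simpl.
      unfold inb. destruct (in_dec Nat.eq_dec i G) as [h|h]; [left; auto|right].
      unfold undb, inb. destruct (in_dec Nat.eq_dec i G); [contradiction|].
      destruct (in_dec Nat.eq_dec i (U0 v Rg D)) as [h'|h']; auto. exfalso. apply h'.
      destruct (feas_in v Rg D 0 Sopt i s Hf Hin) as [r Hval].
      destruct (valid_avail v Rg Hv HR s _ r Hval) as [_ Hy].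
      unfold U0. apply filter_In. split.
      - apply in_seq. split. lia. simpl. apply Hlen. apply in_map_iff. exists (i,s); auto.
      - destruct (Rle_dec (Rabs (snd (pt D i))) (m0 v Rg)); auto. }
    assert (H3 : (cnt (fun i => inb i G) Sopt <= length G)%nat).
    { unfold cnt. rewrite <- (length_map fst).
      apply NoDup_incl_length. apply (nodup_filter_map (fun i => inb i G) Sopt Hnd).
      intros i Hi. apply in_map_iff in Hi. destruct Hi as [[j s] [Hj Hin]]. simpl in Hj. subst j.
      apply filter_In in Hin. destruct Hin as [_ Hin]. simpl in Hin. unfold inb in Hin.
      destruct (in_dec Nat.eq_dec i G); auto. discriminate. }
    unfold G in *. rewrite length_map in H3. lia.
Qed.
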